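(* Let $r\ge1$, $n$ be integers and let $\sigma,\sigma':\mathbb{Z}_n\to\{0,1\}$ satisfy $\mathrm{maj}_r(\sigma)=\sigma'$. Then $b(\sigma')\le b(\sigma)$.
   Context: Cells are elements of $\mathbb{Z}_n$, arithmetic mod $n$; $[a,b]$ denotes the cyclic interval $a,\dots,b$. The majority rule with radius $r$: $\mathrm{maj}_r(\sigma)(i)=0$ if among the cells of $[i-r,i+r]$ strictly more have value $0$ than $1$ under $\sigma$, and $=1$ otherwise. For $\beta\in\{0,1\}$, $B^\beta(\sigma)$ is the set of cell intervals $[i,j]$ with $\sigma(k)=\beta$ for all $k\in[i,j]$ and $\sigma(i-1)=\sigma(j+1)=1-\beta$; $B(\sigma)=B^0(\sigma)\cup B^1(\sigma)$ and $b(\sigma)=|B(\sigma)|$. *)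

(* Defs.v *)
From mathcomp Require Import all_boot.
Set Implicit Arguments. Unset Strict Implicit. Unset Printing Implicit Defensive.

(* Cells of Z_n are represented by 'I_n (n > 0 implicit once a cell exists);
   configurations are functions 'I_n -> bool, with true = 1, false = 0. *)

Lemma shift_lt (n : nat) (i : 'I_n) (d : nat) : (i + d) %% n < n.
Proof. apply: ltn_pmod. exact: leq_ltn_trans (leq0n i) (ltn_ord i). Qed.

Definition shift (n : nat) (i : 'I_n) (d : nat) : 'I_n := Ordinal (shift_lt i d).

Definition pred_cell (n : nat) (i : 'I_n) : 'I_n := shift i n.-1.
Definition succ_cell (n : nat) (i : 'I_n) : 'I_n := shift i 1.

(* The cells of the window [i-r, i+r]: cell i - r + t for t = 0..2r
   (i - r + t computed as i + (n*r - r + t) mod n). *)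
Definition window_cell (n r : nat) (i : 'I_n) (t : nat) : 'I_n :=
  shift i (n * r - r + t).

Definition nzeros (n r : nat) (s : 'I_n -> bool) (i : 'I_n) : nat :=
  count (fun t => ~~ s (window_cell r i t)) (iota 0 (2 * r).+1).
Definition nones (n r : nat) (s : 'I_n -> bool) (i : 'I_n) : nat :=
  count (fun t => s (window_cell r i t)) (iota 0 (2 * r).+1).

Definition maj (n r : nat) (s : 'I_n -> bool) : 'I_n -> bool :=
  fun i => ~~ (nones r s i < nzeros r s i).

(* membership of k in the cyclic interval [i, j] = {i, i+1, ..., j} *)
Definition in_cint (n : nat) (i j k : 'I_n) : bool :=
  ((k + n - i) %% n <= (j + n - i) %% n).

(* B^beta(s): intervals [i,j] (as pairs (i,j)) that are maximal beta-blocks *)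
Definition blocks (n : nat) (beta : bool) (s : 'I_n -> bool) : {set 'I_n * 'I_n} :=
  [set p : 'I_n * 'I_n |
    [&& [forall k : 'I_n, in_cint p.1 p.2 k ==> (s k == beta)],
        s (pred_cell p.1) == ~~ beta &
        s (succ_cell p.2) == ~~ beta]].

Definition B (n : nat) (s : 'I_n -> bool) : {set 'I_n * 'I_n} :=
  blocks false s :|: blocks true s.

Definition b (n : nat) (s : 'I_n -> bool) : nat := #|B s|.

(* Main.v *)
Require Import Defs.
From mathcomp Require Import all_boot zify.
Set Implicit Arguments. Unset Strict Implicit. Unset Printing Implicit Defensive.

Lemma neq_negb (a c : bool) : a != c -> a = ~~ c.
Proof. by case: a; case: c. Qed.

Section Cells.
Variable n : nat.
Hypothesis Hn : 0 < n.

Lemma shiftD (i : 'I_n) a c : shift (shift i a) c = shift i (a + c).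
Proof. apply: val_inj => /=. by rewrite modnDml addnA. Qed.

Lemma shift0 (i : 'I_n) : shift i 0 = i.
Proof. apply: val_inj => /=. by rewrite addn0 modn_small. Qed.

Lemma shiftDn (i : 'I_n) d : shift i (d + n) = shift i d.
Proof. apply: val_inj => /=. by rewrite addnA modnDr. Qed.

Lemma shiftn (i : 'I_n) : shift i n = i.
Proof. by have := shiftDn i 0; rewrite add0n shift0. Qed.

Lemma shift_inj (i j : 'I_n) d : shift i d = shift j d -> i = j.
Proof.
move/(congr1 val) => /= /eqP; rewrite eqn_modDr !modn_small // => /eqP H.
exact: val_inj.
Qed.

Definition off (i k : 'I_n) := (k + n - i) %% n.

Lemma off_lt i k : off i k < n. Proof. exact: ltn_pmod. Qed.

Lemma shift_off i k : shift i (off i k) = k.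
Proof.
apply: val_inj => /=. rewrite /off modnDmr.
have -> : i + (k + n - i) = k + n by have := ltn_ord i; lia.
by rewrite modnDr modn_small.
Qed.

Lemma off_shift i d : off i (shift i d) = d %% n.
Proof.
rewrite /off /=.
have -> : (i + d) %% n + n - i = (i + d) %% n + (n - i) by have := ltn_ord i; lia.
rewrite modnDml.
have -> : i + d + (n - i) = d + n by have := ltn_ord i; lia.
by rewrite modnDr.
Qed.

Definition Bd (s : 'I_n -> bool) := [set x : 'I_n | s x != s (succ_cell x)].

Lemma blocks_inv beta (s : 'I_n -> bool) (i j : 'I_n) : (i, j) \in blocks beta s ->
  [/\ forall k, off i k <= off i j -> s k = beta,
      s (pred_cell i) = ~~ beta & s (succ_cell j) = ~~ beta].
Proof.
rewrite inE /= => /and3P [/forallP H /eqP H1 /eqP H2]; split => //.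
by move=> k hk; apply/eqP; exact: (implyP (H k) hk).
Qed.

Lemma blocks_intro beta (s : 'I_n -> bool) (i j : 'I_n) :
  (forall k, off i k <= off i j -> s k = beta) ->
  s (pred_cell i) = ~~ beta -> s (succ_cell j) = ~~ beta ->
  (i, j) \in blocks beta s.
Proof.
move=> H H1 H2; rewrite inE /= H1 H2 !eqxx !andbT.
apply/forallP => k; apply/implyP => hk; apply/eqP; exact: H.
Qed.

Lemma inB (s : 'I_n -> bool) p : p \in B s -> exists beta, p \in blocks beta s.
Proof. by case/setUP => h; eexists; exact h. Qed.

Lemma run_start_uniq (s : 'I_n -> bool) beta (i i' j : 'I_n) : (i, j) \in blocks beta s ->
  (i', j) \in blocks beta s -> off i j < off i' j -> False.
Proof.
move=> /blocks_inv [H1 H2 H3] /blocks_inv [H1' H2' H3'] hlt.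
set u := off i j in hlt; set u' := off i' j in hlt H1'.
have ei : i = shift i' (u' - u).
  apply: (@shift_inj _ _ u). rewrite shiftD subnK ?(ltnW hlt) //.
  by rewrite !shift_off.
have hp : pred_cell i = shift i' (u' - u).-1.
  rewrite /pred_cell {1}ei shiftD.
  have -> : u' - u + n.-1 = (u' - u).-1 + n by lia.
  by rewrite shiftDn.
have := H1' (pred_cell i).
rewrite hp off_shift modn_small; last by have := off_lt i' j; lia.
rewrite -hp H2 => /(_ _)/esym; case: beta {H1 H2 H3 H2' H3' H1'} => /=; 
  (have h : (u' - u).-1 <= u' by lia); move=> /(_ h) //.
Qed.

Lemma b_le_Bd (s : 'I_n -> bool) : b s <= #|Bd s|.
Proof.
rewrite /b.
have inj : {in B s &, injective (fun p : 'I_n * 'I_n => p.2)}.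
  move=> [i j] [i' j'] /inB [be hb] /inB [be' hb'] /= ej; subst j'.
  have sb := blocks_inv hb; have sb' := blocks_inv hb'.
  case: sb => [K1 _ _]; case: sb' => [K1' _ _].
  have ebe : be' = be by rewrite -(K1' j (leqnn _)) (K1 j (leqnn _)).
  subst be'.
  case: (ltngtP (off i j) (off i' j)) => h.
  - by case: (run_start_uniq hb hb' h).
  - by case: (run_start_uniq hb' hb h).
  - congr pair; apply: (@shift_inj _ _ (off i j)).
    by rewrite {2}h !shift_off.
rewrite -(card_in_imset inj); apply: subset_leq_card.
apply/subsetP => x /imsetP [[i j] /inB [be hb] ->] /=.
case: (blocks_inv hb) => K1 _ K3.
by rewrite inE K3 (K1 j (leqnn _)); case: be {hb K1 K3}.
Qed.

Lemma Bd_le_b (s : 'I_n -> bool) : #|Bd s| <= b s.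
Proof.
apply: leq_trans (leq_imset_card (fun p : 'I_n * 'I_n => p.2) (B s)).
apply: subset_leq_card; apply/subsetP => x; rewrite inE => hx.
have n2 : 1 < n.
  rewrite ltnNge; apply/negP => h; move: hx.
  suff -> : succ_cell x = x by rewrite eqxx.
  apply: val_inj => /=.
  have x0 : (x : nat) = 0 by have := ltn_ord x; lia.
  have e : n = 1 by lia.
  by rewrite x0 add0n e.
set beta := s x.
pose P d := s (shift x (n - d.+1)) != beta.
have hasP : has P (iota 0 n).
  apply/hasP; exists (n - 2); first by rewrite mem_iota; lia.
  rewrite /P; have -> : n - (n - 2).+1 = 1 by lia.
  by rewrite eq_sym.
set v := find P (iota 0 n).
have vlt : v < n by rewrite -[X in _ < X](size_iota 0 n) -has_find.
have Pv : P v by have := nth_find 0 hasP; rewrite nth_iota.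
have bef : forall d, d < v -> s (shift x (n - d.+1)) = beta.
  move=> d hd; have := before_find 0 hd; rewrite nth_iota ?add0n; last lia.
  by rewrite /P => /negbFE/eqP.
apply/imsetP; exists (shift x (n - v), x) => //.
have ex : shift (shift x (n - v)) v = x by rewrite shiftD subnK ?(ltnW vlt) // shiftn.
have ofx : off (shift x (n - v)) x = v by have := off_shift (shift x (n - v)) v; rewrite ex modn_small.
have hbl : (shift x (n - v), x) \in blocks beta s.
  apply: blocks_intro.
  - move=> k; rewrite ofx => hk.
    rewrite -(shift_off (shift x (n - v)) k) shiftD.
    move: hk; set e := off _ k => hk.
    case: (ltngtP e v) hk => he hk.
    + rewrite -(bef (v - e).-1); [congr (s (shift x _)); lia | lia].
    + exfalso; lia.
    + by rewrite he subnK ?(ltnW vlt) // shiftn.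
  - rewrite /pred_cell shiftD.
    have -> : n - v + n.-1 = n - v.+1 + n by lia.
    by rewrite shiftDn; apply: neq_negb.
  - by apply: neq_negb; rewrite eq_sym.
by rewrite /B inE; case hb: beta; rewrite -hb hbl ?orbT.
Qed.

End Cells.

Section Maj.
Variables (n r : nat) (s s' : 'I_n -> bool).
Hypotheses (Hn : 0 < n) (Hr : 1 <= r) (Hs : forall i, maj r s i = s' i).

Local Notation N := (n * r - r).
Local Notation K := (2 * r).+1.

Lemma maj_val i : s' i = (r < nones r s i).
Proof.
rewrite -Hs /maj.
have E : nones r s i + nzeros r s i = K.
  by rewrite /nones /nzeros (count_predC (fun t => s (window_cell r i t))) size_iota.
rewrite -leqNgt; apply/idP/idP => h; lia.
Qed.

Lemma nones_step i : nones r s (succ_cell i) + s (window_cell r i 0)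
  = nones r s i + s (window_cell r i K).
Proof.
rewrite /nones.
have E : forall t, window_cell r (succ_cell i) t = window_cell r i (1 + t).
  by move=> t; rewrite /window_cell /succ_cell shiftD; congr shift; lia.
rewrite (eq_count (a2 := fun t => s (window_cell r i (1 + t)))); last by move=> t; rewrite E.
rewrite -(count_map (addn 1) (fun t => s (window_cell r i t))) -iotaDl.
have h1 : count (fun t => s (window_cell r i t)) (iota 0 K.+1)
  = s (window_cell r i 0) + count (fun t => s (window_cell r i t)) (iota 1 K) by [].
have h2 : count (fun t => s (window_cell r i t)) (iota 0 (K + 1))
  = count (fun t => s (window_cell r i t)) (iota 0 K) + s (window_cell r i K).
  by rewrite iotaD count_cat /= addn0.
rewrite addn1 in h2. rewrite add1n; lia.
Qed.

Lemma mono z (g : bool) : s (window_cell r z 0) = ~~ g -> s' z = g -> s' (succ_cell z) = g.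
Proof.
move=> H1; have E := nones_step z; rewrite H1 in E; rewrite !maj_val.
case: g H1 E => _; case: (s (window_cell r z K)) => /= E h; lia.
Qed.

Lemma bnd z : s' z != s' (succ_cell z) ->
  s (window_cell r z 0) = s' z /\ s (window_cell r z K) = s' (succ_cell z).
Proof.
have E := nones_step z; rewrite !maj_val.
case: (s (window_cell r z 0)) E; case: (s (window_cell r z K)) => /= E;
case: (ltnP r (nones r s z)) => h1; case: (ltnP r (nones r s (succ_cell z))) => h2 //= _;
  exfalso; lia.
Qed.

Definition Pb (x : 'I_n) t := s (shift x (N + t)) != s (shift x (N + t.+1)).
Definition a (x : 'I_n) := find (Pb x) (iota 0 K).
Definition g (x : 'I_n) := shift x (N + a x).

Section X.
Variable x : 'I_n.
Hypothesis hx : x \in Bd s'.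

Lemma hasPb : has (Pb x) (iota 0 K).
Proof.
move: hx; rewrite inE => hx'.
case: (boolP (has _ _)) => // /hasPn H; exfalso.
have C : forall t, t <= K -> s (shift x (N + t)) = s (shift x (N + 0)).
  elim => [|t IH] ht //; rewrite -IH ?(ltnW ht) //.
  have := H t; rewrite mem_iota /= => /(_ ht) /negbNE /eqP //.
have [B1 B2] := bnd hx'.
have := C K (leqnn _); rewrite /window_cell in B1 B2. rewrite B1 B2.
by move=> h; move: hx'; rewrite h eqxx.
Qed.

Lemma a_lt : a x < K.
Proof. by have := hasPb; rewrite has_find size_iota. Qed.

Lemma Pa : Pb x (a x).
Proof. by have := nth_find 0 hasPb; rewrite nth_iota ?a_lt. Qed.

Lemma run t : t <= a x -> s (shift x (N + t)) = s' x.
Proof.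
move: hx; rewrite inE => hx'.
elim: t => [|t IH] ht.
  by have [B1 _] := bnd hx'; rewrite /window_cell in B1.
rewrite -IH ?(ltnW ht) //.
have := before_find 0 ht; rewrite nth_iota ?add0n; last by have := a_lt; lia.
by rewrite /Pb => /negbFE /eqP.
Qed.

Lemma prop t : t <= a x -> s' (shift x t.+1) = ~~ s' x.
Proof.
move: hx; rewrite inE => hx'.
elim: t => [|t IH] ht.
  by apply: neq_negb; rewrite eq_sym.
have := mono (z := shift x t.+1) (g := ~~ s' x).
rewrite /succ_cell shiftD addn1; apply; last by apply: IH; lia.
rewrite negbK /window_cell shiftD -(run ht); congr (s (shift x _)); lia.
Qed.

Lemma gBd : g x \in Bd s.
Proof.
rewrite inE /g /succ_cell shiftD; have := Pa; rewrite /Pb.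
by rewrite addn1 addnS.
Qed.

Lemma s_g : s (g x) = s' x.
Proof. exact: run. Qed.

End X.

Lemma g_inj : {in Bd s' &, injective g}.
Proof.
move=> x y hx hy e.
have ss : s' y = s' x by rewrite -(s_g hx) -(s_g hy) e.
case: (eqVneq x y) => // nxy; exfalso.
set m := off x y.
have ey : y = shift x m by rewrite shift_off.
have m0 : m != 0.
  apply/eqP => h; move: nxy; by rewrite ey h shift0 // eqxx.
have mlt : m < n := off_lt Hn x y.
have ex : x = shift y (n - m).
  by rewrite ey shiftD subnKC ?(ltnW mlt) // shiftn.
case: (leqP m (a x).+1) => h1.
  have := prop hx (t := m.-1); rewrite prednK ?lt0n // -ey ss => /(_ _).
  move=> H; have := H ltac:(lia); by case: (s' x).
case: (leqP (n - m) (a y).+1) => h2.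
  have := prop hy (t := (n - m).-1); rewrite prednK; last lia.
  rewrite -ex ss => /(_ _).
  move=> H; have := H ltac:(lia); by case: (s' x).
have vy : (y : nat) = (x + m) %% n by rewrite {1}ey.
have := congr1 val e; rewrite /g /= vy modnDml -addnA.
rewrite (_ : x + (N + a x) = a x + (x + N)); last lia.
rewrite (_ : x + (m + (N + a y)) = (m + a y) + (x + N)); last lia.
move/eqP; rewrite eqn_modDr !modn_small; lia.
Qed.

Lemma main : b s' <= b s.
Proof.
apply: leq_trans (b_le_Bd Hn s') _.
apply: leq_trans (Bd_le_b Hn s).
rewrite -(card_in_imset g_inj); apply: subset_leq_card.
apply/subsetP => z /imsetP [x hx ->]; exact: gBd.
Qed.
End Maj.

Theorem claim11 (r n : nat) (s s' : 'I_n -> bool) :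
  1 <= r -> 0 < n -> (forall i, maj r s i = s' i) -> b s' <= b s.
Proof. move=> Hr Hn Hs; exact: main Hn Hr Hs. Qed.
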